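(* Let $\mathcal{G}_R(\mathcal{N}_R,\mathcal{E}_R)$ be an R-graph rooted at $n_{dst}$ with ingress points $\mathcal{M}$, and let $\mathcal{G}'_R$ be the graph obtained from it by the shortest-path transformation described in the context. Let $f$ and $f'$ be the certain routing functions computed on $\mathcal{G}_R$ and $\mathcal{G}'_R$ respectively. Then $\{i\in\mathcal{N}_R: f(i)\neq 0\}\subseteq\{i\in\mathcal{N}_R: f'(i)\neq 0\}$, i.e., applying the transformation can only increase (not decrease) the set of nodes with certain routes.
   Context: An R-graph is a directed acyclic graph $\mathcal{G}_R(\mathcal{N}_R,\mathcal{E}_R)$ rooted at a destination node $n_{dst}$; an edge $j\to i$ means $i$ may use the routing path learned from its parent $j$; $P_i=\{j:e_{ji}\in\mathcal{E}_R\}$. $n_{dst}$ has a finite set $\mathcal{M}$ of ingress points, and each child of $n_{dst}$ is attached to exactly one ingress point. Certain routing function $f:\mathcal{N}_R\to\mathcal{M}\cup\{0\}$ on a given R-graph: for children $i$ of $n_{dst}$, $f(i)$ is their ingress point; visiting the remaining nodes (other than $n_{dst}$) in a topological order, let $CR_i=\{f(j):j\in P_i\}$; set $f(i)=0$ if $0\in CR_i$ or $|CR_i|\neq 1$, and otherwise set $f(i)$ to the unique element of $CR_i$. Shortest-path transformation: set $L_{n_{dst}}=0$ and $L_i=\infty$ for all other nodes; visiting the nodes other than $n_{dst}$ in a topological order, set $L_i=\min\{L_i,\min_{j\in P_i}(L_j+1)\}$ and then remove from $\mathcal{E}_R$ every edge $j\to i$ with $L_j+1>L_i$. *)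

(* Defs.v *)
From mathcomp Require Import all_boot.
Set Implicit Arguments. Unset Strict Implicit. Unset Printing Implicit Defensive.

(* Nodes form a finite type T. A graph is an edge relation E : rel T, where
   E j i means there is an edge j -> i (j is a parent of i). *)

Section RGraph.
Variable T : finType.

Definition topo_order (E : rel T) (s : seq T) : Prop :=
  perm_eq s (enum T) /\ (forall j i, E j i -> index j s < index i s).

Definition is_Rgraph (E : rel T) (dst : T) : Prop :=
  [/\ exists s, topo_order E s,
      forall i, ~~ E i dst &
      forall i, connect E dst i].

Variable M : eqType.   (* ingress points; None encodes the value 0 *)

Definition cr_step (E : rel T) (dst : T) (g : T -> option M) (i : T)
  : T -> option M :=
  if (i == dst) || E dst i then g else
  let CR := undup [seq g j | j <- enum T & E j i] in
  let v := match CR with [:: Some m] => Some m | _ => None end in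
  fun x => if x == i then v else g x.

Definition certain_route (E : rel T) (dst : T) (ing : T -> M) (s : seq T)
  : T -> option M :=
  foldl (cr_step E dst)
        (fun i => if E dst i then Some (ing i) else None) s.

(* extended naturals: None = infinity *)
Definition succx (a : option nat) : option nat := omap S a.
Definition minx (a b : option nat) : option nat :=
  match a, b with
  | Some x, Some y => Some (minn x y)
  | Some x, None => Some x
  | None, b => b
  end.
Definition ltx (a b : option nat) : bool :=
  match a, b with
  | Some x, Some y => x < y
  | Some _, None => true
  | None, _ => false
  end.

Definition sp_step (dst : T) (st : (T -> option nat) * rel T) (i : T)
  : (T -> option nat) * rel T :=
  let: (L, E) := st in
  if i == dst then (L, E) else
  let Li := minx (L i) (foldr minx None [seq succx (L j) | j <- enum T & E j i]) in
  let L' := fun x => if x == i then Li else L x in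
  let E' := fun a b => E a b && ~~ ((b == i) && ltx (L' b) (succx (L' a))) in
  (L', E').

Definition sp_transform (E : rel T) (dst : T) (s : seq T) : rel T :=
  (foldl (sp_step dst)
         ((fun i => if i == dst then Some 0 else None), E) s).2.

End RGraph.

(* Main.v *)
Require Import Defs.
From mathcomp Require Import all_boot.
Set Implicit Arguments. Unset Strict Implicit. Unset Printing Implicit Defensive.

Section Aux.
Variables (T : finType) (M : eqType).

Lemma cr_step_other (E : rel T) dst (g : T -> option M) i y :
  y != i -> cr_step E dst g i y = g y.
Proof. move=> /negbTE yi; rewrite /cr_step; case: ifP => //= _; by rewrite yi. Qed.

Lemma foldl_cr_notin (E : rel T) dst (g : T -> option M) q y :
  y \notin q -> foldl (cr_step E dst) g q y = g y.
Proof.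
elim: q g => //= a q IH g; rewrite inE negb_or => /andP[ya yq].
by rewrite IH // cr_step_other.
Qed.

Lemma cr_char (E : rel T) dst (ing : T -> M) s x : topo_order E s ->
  certain_route E dst ing s x =
   if (x == dst) || E dst x then (if E dst x then Some (ing x) else None)
   else match undup [seq certain_route E dst ing s j | j <- enum T & E j x]
        with [:: Some m] => Some m | _ => None end.
Proof.
case=> Hp Hlt.
have xs: x \in s by rewrite (perm_mem Hp) mem_enum.
have us: uniq s by rewrite (perm_uniq Hp) enum_uniq.
move: us Hlt; case/splitPr: xs => p1 p2.
rewrite cat_uniq => /and3P[u1 hh /andP[xp2 u2]] Hlt.
have xp1 : x \notin p1 by apply: contra hh => h; apply/hasP; exists x; rewrite ?inE ?eqxx.
set g1 := foldl (cr_step E dst) (fun i => if E dst i then Some (ing i) else None) p1.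
have Hfin: forall j, j \in p1 -> certain_route E dst ing (p1 ++ x :: p2) j = g1 j.
  move=> j jp1.
  have jx : j \notin x :: p2.
    apply: contra hh => h; apply/hasP; exists j => //.
  move: jx; rewrite inE negb_or => /andP[jx jp2].
  by rewrite /certain_route foldl_cat /= foldl_cr_notin // cr_step_other.
rewrite {1}/certain_route foldl_cat /= foldl_cr_notin // -/g1.
rewrite /cr_step; case H: ((x == dst) || E dst x) => /=.
  by rewrite /g1 foldl_cr_notin.
rewrite eqxx.
have -> : [seq g1 j | j <- enum T & E j x] =
          [seq certain_route E dst ing (p1 ++ x :: p2) j | j <- enum T & E j x].
  apply/eq_in_map => j; rewrite mem_filter => /andP[Ej _].
  rewrite Hfin //; move: (Hlt _ _ Ej); rewrite !index_cat (negbTE xp1) /= eqxx addn0.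
  by case: ifP => // _; rewrite ltnNge leq_addr.
by [].
Qed.

Lemma connect_parent (E : rel T) dst x : connect E dst x -> x != dst -> exists j, E j x.
Proof.
move/connectP => [p pth ->]; move: pth.
case/lastP: p => [|p y] /=; first by rewrite eqxx.
by rewrite rcons_path last_rcons => /andP[_ h] _; exists (last dst p).
Qed.

Lemma undup_const (A : eqType) (a : A) l :
  a \in l -> (forall x, x \in l -> x = a) -> undup l = [:: a].
Proof.
elim: l => //= b l IH; rewrite inE => ha H.
have ba : b = a by apply: H; rewrite inE eqxx.
subst b; case: ifP => al.
  by apply: IH => // x xl; apply: H; rewrite inE xl orbT.
suff -> : l = [::] by [].
case: l al H {IH ha} => // c l; rewrite inE => /norP[/negP ca _] H.
by case: ca; rewrite (H c) // !inE eqxx orbT.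
Qed.

Lemma foldr_minx_mem l k : foldr minx None l = Some k -> Some k \in l.
Proof.
elim: l k => //= a l IH k; case: a => [x|].
  case E: (foldr minx None l) => [y|] /= [<-].
    rewrite inE; case: (leqP x y) => h.
      by rewrite eqxx.
    by rewrite (IH _ E) orbT.
  by rewrite inE eqxx.
by move=> /= H; rewrite inE (IH _ H) orbT.
Qed.

Variable dst : T.

Lemma sp_step_pres (st : (T -> option nat) * rel T) i y :
  (y == dst) || (y != i) ->
  (sp_step dst st i).1 y = st.1 y /\ forall a, (sp_step dst st i).2 a y = st.2 a y.
Proof.
case: st => L E0 H; rewrite /sp_step.
case: ifP => [//|/negbT idst] /=.
have yi : y != i by case/orP: H => // /eqP ->; rewrite eq_sym.
by split; [rewrite (negbTE yi) | move=> a; rewrite (negbTE yi) /= andbT].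
Qed.

Lemma sp_fold_pres q (st : (T -> option nat) * rel T) y :
  (y == dst) || (y \notin q) ->
  (foldl (sp_step dst) st q).1 y = st.1 y /\
  forall a, (foldl (sp_step dst) st q).2 a y = st.2 a y.
Proof.
elim: q st => [|i q IH] st /=; first by split.
rewrite inE negb_or => H.
have c1 : (y == dst) || (y \notin q) by case/orP: H => [->|/andP[_ ->]]; rewrite ?orbT.
have c2 : (y == dst) || (y != i) by case/orP: H => [->|/andP[-> _]]; rewrite ?orbT.
have [H1 H2] := IH (sp_step dst st i) c1.
have [H3 H4] := sp_step_pres st c2.
by split; [rewrite H1 H3 | move=> a; rewrite H2 H4].
Qed.

Lemma sp_fold_sub q (st : (T -> option nat) * rel T) a b :
  (foldl (sp_step dst) st q).2 a b -> st.2 a b.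
Proof.
elim: q st => //= i q IH st H; have := IH _ H.
case: st {H} => L E0; rewrite /sp_step; case: ifP => // _ /= /andP[] //.
Qed.

Lemma sp_step_at (L : T -> option nat) (E1 : rel T) x a :
  x != dst -> a != x -> L x = None ->
  (sp_step dst (L, E1) x).2 a x =
  E1 a x && ~~ ltx (foldr minx None [seq succx (L j) | j <- enum T & E1 j x]) (succx (L a)).
Proof.
move=> xd ax Lx; rewrite /sp_step (negbTE xd) /= !eqxx Lx (negbTE ax) /=.
by [].
Qed.


Lemma sp_key (E : rel T) s x : topo_order E s -> x != dst ->
  exists L : T -> option nat, [/\ L x = None, L dst = Some 0 &
    forall a, a != x -> sp_transform E dst s a x =
      E a x && ~~ ltx (foldr minx None [seq succx (L j) | j <- enum T & E j x]) (succx (L a))].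
Proof.
case=> Hp Hlt xd.
have xs: x \in s by rewrite (perm_mem Hp) mem_enum.
have us: uniq s by rewrite (perm_uniq Hp) enum_uniq.
move: us Hlt; case/splitPr: xs => p1 p2.
rewrite cat_uniq => /and3P[u1 hh /andP[xp2 u2]] Hlt.
have xp1 : x \notin p1 by apply: contra hh => h; apply/hasP; exists x; rewrite ?inE ?eqxx.
rewrite /sp_transform foldl_cat /=.
set st1 := foldl (sp_step dst) _ p1.
have [P1 P2] := sp_fold_pres (q:=p1) ((fun i => if i == dst then Some 0 else None), E)
   (y := x) (introT orP (or_intror xp1)).
have [D1 _] := sp_fold_pres (q:=p1) ((fun i => if i == dst then Some 0 else None), E)
   (y := dst) (introT orP (or_introl (eqxx dst))).
rewrite -/st1 /= (negbTE xd) in P1 P2.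
rewrite -/st1 /= eqxx in D1.
have c3 : (x == dst) || (x \notin p2) by rewrite xp2 orbT.
clearbody st1; case: st1 P1 P2 D1 => L E1 /= P1 P2 D1.
exists L; split => // a ax.
have [_ Q2] := sp_fold_pres (q:=p2) (sp_step dst (L, E1) x) c3.
rewrite Q2 sp_step_at // P2.
have -> : [seq j <- enum T | E1 j x] = [seq j <- enum T | E j x].
  by apply: eq_filter => j; rewrite P2.
by [].
Qed.

End Aux.

Lemma sp_C (T : finType) (E : rel T) dst s x : is_Rgraph E dst -> topo_order E s ->
  x != dst -> exists j, sp_transform E dst s j x.
Proof.
case=> _ _ Hc Hs xd.
have [j0 Ej0] := connect_parent (Hc x) xd.
have noself : forall j, E j x -> j != x.
  move=> j Ej; apply/eqP => ejx; move: (Hs.2 _ _ Ej); by rewrite ejx ltnn.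
have [L [Lx Ld H]] := sp_key Hs xd.
case HLi: (foldr minx None [seq succx (L j) | j <- enum T & E j x]) => [k|].
  have /mapP[j] := foldr_minx_mem HLi.
  rewrite mem_filter => /andP[Ej _] Hk.
  by exists j; rewrite H ?noself // Ej HLi -Hk /= ltnn.
by exists j0; rewrite H ?noself // Ej0 HLi.
Qed.

Lemma sp_B (T : finType) (E : rel T) dst s x : is_Rgraph E dst -> topo_order E s ->
  E dst x -> sp_transform E dst s dst x.
Proof.
case=> _ Hnd _ Hs Ex.
have xd : x != dst by apply/eqP => exd; move: (Hnd dst); rewrite -{2}exd Ex.
have dx : dst != x by rewrite eq_sym.
have [L [Lx Ld H]] := sp_key Hs xd.
rewrite H // Ex Ld /=.
case HLi: (foldr minx None [seq succx (L j) | j <- enum T & E j x]) => [k|] //=.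
case: k HLi => // HLi.
have /mapP[j _] := foldr_minx_mem HLi.
by case: (L j).
Qed.

Theorem theorem3p4 (T : finType) (M : finType) (E : rel T) (dst : T)
    (ing : T -> M) (s s_sp s' : seq T) :
  is_Rgraph E dst ->
  topo_order E s ->
  topo_order E s_sp ->
  topo_order (sp_transform E dst s_sp) s' ->
  forall i : T,
    certain_route E dst ing s i != None ->
    certain_route (sp_transform E dst s_sp) dst ing s' i != None.
Proof.
move=> HR Hs Hsp Hs'.
have HR' := HR; case: HR' => _ Hnd _.
set E' := sp_transform E dst s_sp.
have sub : forall a b, E' a b -> E a b by move=> a b; apply: sp_fold_sub.
set f := certain_route E dst ing s.
set f' := certain_route E' dst ing s'.
have main : forall n i, index i s' < n -> forall m, f i = Some m -> f' i = Some m.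
  elim=> // n IH i Hi m Hf.
  move: Hf; rewrite /f /f' (cr_char dst ing i Hs) (cr_char dst ing i Hs') -/f -/f'.
  case: (eqVneq i dst) => [->|id].
    by rewrite ?eqxx /= (negbTE (Hnd dst)).
  rewrite /=.
  case Ed: (E dst i).
    by rewrite (sp_B HR Hsp Ed).
  have E'd : E' dst i = false by apply/negbTE/negP => /sub; rewrite Ed.
  move: E'd; rewrite /E' => ->.
  case Hu: (undup _) => [|[m'|] [|? ?]] //= [<-].
  have Hall : forall j, E j i -> f j = Some m'.
    move=> j Ej; have: f j \in undup [seq f j | j <- enum T & E j i].
      by rewrite mem_undup; apply/mapP; exists j => //; rewrite mem_filter Ej mem_enum.
    by rewrite Hu inE => /eqP.
  have Hall' : forall j, E' j i -> f' j = Some m'.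
    move=> j Ej; apply: IH; last by apply: Hall; apply: sub.
    by move: (Hs'.2 _ _ Ej) => h; apply: leq_trans h _; rewrite -ltnS.
  have [j0 Ej0] := sp_C HR Hsp id.
  rewrite (@undup_const _ (Some m')) //.
    apply/mapP; exists j0; first by rewrite mem_filter mem_enum andbT; exact: Ej0.
    by rewrite Hall'.
  by move=> y /mapP[j]; rewrite mem_filter => /andP[Ej _] ->; apply: Hall'.
move=> i; case Hf: (f i) => [m|] // _.
by rewrite (main _ i (ltnSn _) m Hf).
Qed.
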